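(* Assume $I_\delta=0$. Let $S\in\mathsf{X}$ be $\delta$-admissible and $G=\mathcal{G}(S)$. Then $$\|G\|_\infty\le C,\qquad \operatorname{supp}G\subseteq[-C\delta,C\delta],\qquad \Big|\int_{\mathbb{R}}G(x)\,dx\Big|\le C\big(1+\|S''\|_\infty\big)\delta^2$$ for a constant $C$ independent of $S$, $\delta$, $c\in[c_0,c_1]$ and $R_0\in\mathcal{R}_c$.
   Context: $\Delta_1F(x)=F(x+1)-2F(x)+F(x-1)$, $a(k)=\frac{\sin(k/2)}{k/2}$, $\Psi_0'(r)=\mathrm{sgn}(r)$. Potentials: $(\Psi_\delta)_{\delta>0}$ is a family of $C^2$ functions such that $\Psi_\delta'(r)=\mathrm{sgn}(r)$ for $r\notin(-\delta,\delta)$, and $|\Psi_\delta'|\le C_\Psi$, $|\Psi_\delta''|\le C_\Psi/\delta$ on $\mathbb{R}$ with $C_\Psi$ independent of $\delta$; $I_\delta:=\frac12\int_{\mathbb{R}}(\Psi_\delta'-\Psi_0')\,dr$. Unperturbed waves (standing hypothesis, a known result): there are constants $0<c_0<1$ and $x_0,r_0,d_0,D_0>0$ such that for every $c\in[c_0,1)$ the equation $a(k)=c$ has exactly one positive solution $k_c$, and there is a two-parameter family $\mathcal{R}_c$ of functions $R_0\in W^{2,\infty}(\mathbb{R})$ solving $c^2R_0''=\Delta_1(R_0-\mathrm{sgn}(R_0))$ with $R_0(0)=0$, given by $R_0=\bar R_0+\alpha(\cos(k_c\cdot)-1)+\beta\sin(k_c\cdot)$, $(\alpha,\beta)$ in an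 open neighbourhood $U_c$ of $0\in\mathbb{R}^2$, where $\bar R_0$ is a fixed member for which $\lim_{x\to+\infty}\bar R_0(x)$ exists and $\lim_{x\to-\infty}(\bar R_0(x)-\alpha_c^-(\cos(k_cx)-1)-\beta_c^-\sin(k_cx))$ exists for some constants $\alpha_c^-,\beta_c^-$. Every $R_0\in\mathcal{R}_c$ satisfies $\|R_0\|_\infty\le D_0(1-c^2)^{-1}$, $R_0(x)>r_0$ for $x>x_0$, $R_0(x)<-r_0$ for $x<-x_0$, $R_0'(x)>d_0$ for $|x|<x_0$. Setting: $c_1\in(c_0,1)$ fixed, $c\in[c_0,c_1]$, $R_0\in\mathcal{R}_c$ fixed. $\mathsf{X}:=\{S\in W^{2,\infty}(\mathbb{R}):S(0)=0,\ \lim_{x\to+\infty}S(x)\text{ exists}\}$. $\mathcal{G}(S)(x):=\Psi_\delta'(R_0(x)+S(x))-\Psi_0'(R_0(x))$. $S\in\mathsf{X}$ is called $\delta$-admissible if there exist $x_-<0<x_+$ with: $R_0(x_\pm)+S(x_\pm)=\pm\delta$; $R_0(x)+S(x)<-\delta$ for $x<x_-$; $R_0(x)+S(x)>\delta$ for $x>x_+$; and $\frac12R_0'(0)<R_0'(x)+S'(x)<2R_0'(0)$ for $x_-<x<x_+$. *)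

(* Defs.v *)
From Stdlib Require Import Reals.
Open Scope R_scope.

(* sign function, sgn 0 = 0 ; Psi_0' = sgn *)
Definition sgn (r : R) : R :=
  if Rlt_dec 0 r then 1 else if Rlt_dec r 0 then -1 else 0.

Definition Delta1 (F : R -> R) (x : R) : R := F (x + 1) - 2 * F x + F (x - 1).

Definition a_sym (k : R) : R := sin (k / 2) / (k / 2).

Definition bounded (f : R -> R) : Prop := exists M, forall x, Rabs (f x) <= M.

Definition lipschitz (f : R -> R) (L : R) : Prop :=
  forall x y, Rabs (f x - f y) <= L * Rabs (x - y).

(* W^{2,infty}(R): bounded C^1 function whose derivative is bounded and
   Lipschitz (equivalently, W^{1,infty}); ||f''||_infty = best Lipschitz
   constant of f'. *)
Definition W2inf (f : R -> R) : Prop :=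
  exists f' : R -> R,
    (forall x, derivable_pt_lim f x (f' x)) /\ bounded f /\ bounded f' /\
    exists L, lipschitz f' L.

Definition has_lim_pinf (f : R -> R) : Prop :=
  exists l, forall eps, 0 < eps -> exists M, forall x, M < x -> Rabs (f x - l) < eps.

Definition has_lim_minf (f : R -> R) : Prop :=
  exists l, forall eps, 0 < eps -> exists M, forall x, x < M -> Rabs (f x - l) < eps.

(* c^2 R0'' = Delta_1 (R0 - sgn R0), in integrated (a.e.) form:
   R0'(y) - R0'(x) = c^{-2} int_x^y Delta_1(R0 - sgn R0). *)
Definition solves_wave_eq (c : R) (f : R -> R) : Prop :=
  forall f' : R -> R, (forall x, derivable_pt_lim f x (f' x)) ->
  forall x y, exists pr : Riemann_integrable
                 (Delta1 (fun s => f s - sgn (f s))) x y,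
    f' y - f' x = RiemannInt pr / c ^ 2.

Definition open2 (U : R -> R -> Prop) : Prop :=
  forall a b, U a b -> exists e, 0 < e /\
    forall a' b', Rabs (a' - a) < e -> Rabs (b' - b) < e -> U a' b'.

Definition unperturbed_waves (c0 x0 r0 d0 D0 : R) (Rc : R -> (R -> R) -> Prop) : Prop :=
  0 < c0 < 1 /\ 0 < x0 /\ 0 < r0 /\ 0 < d0 /\ 0 < D0 /\
  forall c, c0 <= c < 1 ->
    exists kc, 0 < kc /\ a_sym kc = c /\
      (forall k, 0 < k -> a_sym k = c -> k = kc) /\
      exists (Rbar : R -> R) (U : R -> R -> Prop),
        open2 U /\ U 0 0 /\
        (forall R0, Rc c R0 <-> exists al be, U al be /\
            R0 = (fun x => Rbar x + al * (cos (kc * x) - 1) + be * sin (kc * x))) /\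
        has_lim_pinf Rbar /\
        (exists alm bem, has_lim_minf
           (fun x => Rbar x - alm * (cos (kc * x) - 1) - bem * sin (kc * x))) /\
        forall R0, Rc c R0 ->
          W2inf R0 /\ solves_wave_eq c R0 /\ R0 0 = 0 /\
          (forall x, Rabs (R0 x) <= D0 / (1 - c ^ 2)) /\
          (forall x, x0 < x -> r0 < R0 x) /\
          (forall x, x < - x0 -> R0 x < - r0) /\
          (forall dR0 : R -> R, (forall x, derivable_pt_lim R0 x (dR0 x)) ->
             forall x, Rabs x < x0 -> d0 < dR0 x).

Definition potential_family (Psi dPsi ddPsi : R -> R -> R) (CPsi : R) : Prop :=
  forall delta, 0 < delta ->
    (forall r, derivable_pt_lim (Psi delta) r (dPsi delta r)) /\
    (forall r, derivable_pt_lim (dPsi delta) r (ddPsi delta r)) /\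
    continuity (ddPsi delta) /\
    (forall r, (r <= - delta \/ delta <= r) -> dPsi delta r = sgn r) /\
    (forall r, Rabs (dPsi delta r) <= CPsi) /\
    (forall r, Rabs (ddPsi delta r) <= CPsi / delta).

(* I_delta = 1/2 int_R (Psi_delta' - Psi_0') = 0; the integrand vanishes
   outside (-delta, delta). *)
Definition I_zero (dPsi : R -> R -> R) (delta : R) : Prop :=
  exists pr : Riemann_integrable (fun r => dPsi delta r - sgn r) (- delta) delta,
    RiemannInt pr = 0.

Definition inX (S : R -> R) : Prop := W2inf S /\ S 0 = 0 /\ has_lim_pinf S.

Definition admissible (delta : R) (R0 dR0 S dS : R -> R) : Prop :=
  exists xm xp, xm < 0 < xp /\
    R0 xm + S xm = - delta /\ R0 xp + S xp = delta /\
    (forall x, x < xm -> R0 x + S x < - delta) /\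
    (forall x, xp < x -> delta < R0 x + S x) /\
    (forall x, xm < x < xp ->
       dR0 0 / 2 < dR0 x + dS x /\ dR0 x + dS x < 2 * dR0 0).

Definition Gmap (dPsi : R -> R -> R) (delta : R) (R0 S : R -> R) (x : R) : R :=
  dPsi delta (R0 x + S x) - sgn (R0 x).

(* Main.v *)
Require Import Defs.
From Stdlib Require Import Reals Lra.
From Coquelicot Require Import Coquelicot.
Open Scope R_scope.

Lemma sgn_pos r : 0 < r -> sgn r = 1.
Proof. intros h; unfold sgn; destruct (Rlt_dec 0 r); lra. Qed.
Lemma sgn_neg r : r < 0 -> sgn r = -1.
Proof. intros h; unfold sgn; destruct (Rlt_dec 0 r); [lra|]; destruct (Rlt_dec r 0); lra. Qed.
Lemma sgn_0 : sgn 0 = 0.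
Proof. unfold sgn; destruct (Rlt_dec 0 0); [lra|]; destruct (Rlt_dec 0 0); lra. Qed.
Lemma sgn_abs r : Rabs (sgn r) <= 1.
Proof. unfold sgn; destruct (Rlt_dec 0 r); [rewrite Rabs_R1; lra|destruct (Rlt_dec r 0)];
  unfold Rabs; destruct Rcase_abs; lra. Qed.
Lemma sgn_mul a x : 0 < a -> sgn (a * x) = sgn x.
Proof. intros ha. destruct (Rtotal_order x 0) as [h|[h|h]].
- rewrite !sgn_neg; nra.
- subst; rewrite Rmult_0_r; auto.
- rewrite !sgn_pos; nra. Qed.

Lemma lip_of_deriv f f' B : (forall t, derivable_pt_lim f t (f' t)) ->
  (forall t, Rabs (f' t) <= B) -> forall x y, Rabs (f x - f y) <= B * Rabs (x - y).
Proof.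
  intros hd hb x y.
  destruct (Rtotal_order x y) as [h|[h|h]].
  - destruct (MVT_cor2 f f' x y h) as [z [hz _]]; [intros; apply hd|].
    replace (f x - f y) with (- (f y - f x)) by ring. rewrite Rabs_Ropp, hz, Rabs_mult.
    replace (Rabs (x - y)) with (Rabs (y - x)) by (rewrite <- Rabs_Ropp; f_equal; ring).
    apply Rmult_le_compat_r; [apply Rabs_pos| apply hb].
  - subst. replace (y - y) with 0 by ring. replace (f y - f y) with 0 by ring. rewrite Rabs_R0. specialize (hb y).
    pose proof (Rabs_pos (f' y)). nra.
  - destruct (MVT_cor2 f f' y x h) as [z [hz _]]; [intros; apply hd|].
    rewrite hz, Rabs_mult. apply Rmult_le_compat_r; [apply Rabs_pos| apply hb].
Qed.

Lemma quad_bound g g' K : 0 <= K -> (forall t, derivable_pt_lim g t (g' t)) ->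
  (forall t, Rabs (g' t) <= K * Rabs t) -> forall x, Rabs (g x - g 0) <= K * x ^ 2.
Proof.
  intros hK hd hb x.
  destruct (Rtotal_order x 0) as [h|[h|h]].
  - destruct (MVT_cor2 g g' x 0 h) as [z [hz hz2]]; [intros; apply hd|].
    replace (g x - g 0) with (- (g 0 - g x)) by ring. rewrite Rabs_Ropp, hz, Rabs_mult.
    specialize (hb z). rewrite (Rabs_left z) in hb by lra. rewrite (Rabs_right (0 - x)) by lra.
    assert (Rabs (g' z) * (0 - x) <= K * (- z) * (0 - x)) by (apply Rmult_le_compat_r; lra).
    assert (K * (- z) <= K * (- x)) by (apply Rmult_le_compat_l; lra). nra.
  - subst. replace (g 0 - g 0) with 0 by ring. rewrite Rabs_R0. nra.
  - destruct (MVT_cor2 g g' 0 x h) as [z [hz hz2]]; [intros; apply hd|].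
    rewrite hz, Rabs_mult.
    specialize (hb z). rewrite (Rabs_right z) in hb by lra. rewrite (Rabs_right (x - 0)) by lra.
    assert (Rabs (g' z) * (x - 0) <= K * z * (x - 0)) by (apply Rmult_le_compat_r; lra).
    assert (K * z <= K * x) by (apply Rmult_le_compat_l; lra). nra.
Qed.

Lemma cont_of_deriv f f' x : (forall t, derivable_pt_lim f t (f' t)) -> continuity_pt f x.
Proof. intros hd. apply derivable_continuous_pt. exists (f' x). apply hd. Qed.
Lemma le_div_helper y d e : 0 < d -> y * d <= e -> y <= e / d.
Proof. intros hd h. unfold Rdiv. apply Rmult_le_reg_r with d; auto.
  rewrite Rmult_assoc, Rinv_l by lra. lra. Qed.
Lemma RInt_abs_bound F x y B : (forall t, Rabs (F t) <= B) -> ex_RInt F x y ->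
  Rabs (RInt F x y) <= B * Rabs (y - x).
Proof.
  intros hb he. destruct (Rle_dec x y) as [h|h].
  - rewrite (Rabs_right (y - x)) by lra. rewrite Rmult_comm. apply abs_RInt_le_const; auto.
  - rewrite <- (opp_RInt_swap F y x) by (apply ex_RInt_swap; auto).
    change (opp (RInt F y x)) with (- RInt F y x). rewrite Rabs_Ropp. rewrite (Rabs_left (y - x)) by lra.
    replace (- (y - x)) with (x - y) by ring. rewrite Rmult_comm.
    apply abs_RInt_le_const; auto; [lra| apply ex_RInt_swap; auto].
Qed.
Lemma is_RInt_zero_ext (f : R -> R) p q : (forall x, Rmin p q < x < Rmax p q -> f x = 0) ->
  is_RInt f p q 0.
Proof.
  intros hf. apply is_RInt_ext with (fun _ => 0).
  - intros x hx; symmetry; auto.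
  - assert (E : scal (q - p) (0:R) = 0) by (change (scal (q - p) (0:R)) with ((q - p) * 0); apply Rmult_0_r).
    exact (eq_rect _ (fun l => is_RInt (fun _ => 0) p q l) (is_RInt_const p q (0:R)) _ E).
Qed.

Lemma cont_to_coq f x : continuity_pt f x -> continuous f x.
Proof. intros h. apply continuity_pt_filterlim. exact h. Qed.
Lemma is_RInt_val (f : R -> R) p q (l l' : R) : is_RInt f p q l -> l = l' -> is_RInt f p q l'.
Proof. intros H E; subst; exact H. Qed.

Theorem lemma3p3 (c0 x0 r0 d0 D0 : R) (Rc : R -> (R -> R) -> Prop) (c1 : R)
  (Psi dPsi ddPsi : R -> R -> R) (CPsi : R) :
  unperturbed_waves c0 x0 r0 d0 D0 Rc ->
  c0 < c1 < 1 ->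
  potential_family Psi dPsi ddPsi CPsi ->
  exists C : R, 0 < C /\
    forall (delta c : R) (R0 dR0 S dS : R -> R),
      0 < delta -> I_zero dPsi delta ->
      c0 <= c <= c1 -> Rc c R0 ->
      (forall x, derivable_pt_lim R0 x (dR0 x)) ->
      inX S -> (forall x, derivable_pt_lim S x (dS x)) ->
      admissible delta R0 dR0 S dS ->
      (forall x, Rabs (Gmap dPsi delta R0 S x) <= C) /\
      (forall x, Gmap dPsi delta R0 S x <> 0 -> - (C * delta) <= x <= C * delta) /\
      (forall L, lipschitz dS L ->
         forall M, C * delta <= M ->
           exists pr : Riemann_integrable (Gmap dPsi delta R0 S) (- M) M,
             Rabs (RiemannInt pr) <= C * (1 + L) * delta ^ 2).
Proof.
  intros HW Hc1 HP.
  destruct HW as [Hc0 [Hx0 [Hr0 [Hd0 [HD0 Hall]]]]].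
  assert (HCP : 0 <= CPsi).
  { destruct (HP 1 ltac:(lra)) as [_ [_ [_ [_ [hb _]]]]]. specialize (hb 0).
    pose proof (Rabs_pos (dPsi 1 0)); lra. }
  set (K := 2 / d0).
  assert (HK : 0 < K) by (unfold K; apply Rdiv_lt_0_compat; lra).
  set (B1 := D0 / (1 - c1 ^ 2) + 1).
  assert (Hc1sq : 0 < 1 - c1 ^ 2) by nra.
  assert (HB1 : 0 < B1) by (unfold B1; assert (0 < D0 / (1 - c1^2)) by (apply Rdiv_lt_0_compat; lra); lra).
  set (L0 := 4 * B1 / c0 ^ 2).
  assert (HL0 : 0 < L0) by (unfold L0; apply Rdiv_lt_0_compat; nra).
  exists (CPsi + 1 + K + 2 * K ^ 3 * (CPsi + 1) * (L0 + 1)).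
  split.
  { assert (0 <= 2 * K ^ 3 * (CPsi + 1) * (L0 + 1)).
    { apply Rmult_le_pos; [|lra]. apply Rmult_le_pos; [|lra]. apply Rmult_le_pos; [lra|]. 
      apply pow_le; lra. }
    lra. }
  set (C := CPsi + 1 + K + 2 * K ^ 3 * (CPsi + 1) * (L0 + 1)).
  assert (HC3 : 0 <= 2 * K ^ 3 * (CPsi + 1) * (L0 + 1)).
  { apply Rmult_le_pos; [|lra]. apply Rmult_le_pos; [|lra]. apply Rmult_le_pos; [lra|].
    apply pow_le; lra. }
  intros delta c R0 dR0 S dS hd hI hc hR0 hdR0 hS hdS hadm.
  destruct (Hall c ltac:(lra)) as [kc [_ [_ [_ [Rbar [U [_ [_ [_ [_ [_ Hprop]]]]]]]]]]].
  destruct (Hprop R0 hR0) as [_ [Hwave [HR00 [HRb [HRpos [HRneg HRd]]]]]].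
  clear Hprop Hall.
  destruct (HP delta hd) as [hdP [hddP [_ [hsg [hbP hbPP]]]]].
  assert (hdR00 : d0 < dR0 0) by (apply HRd; auto; rewrite Rabs_R0; lra).
  assert (Hsg : forall x, sgn (R0 x) = sgn x).
  { intros x. destruct (Rtotal_order x 0) as [h|[h|h]].
    - rewrite (sgn_neg x) by lra. apply sgn_neg.
      destruct (Rlt_dec x (- x0)) as [h2|h2]; [specialize (HRneg x h2); lra|].
      destruct (MVT_cor2 R0 dR0 x 0 h) as [z [hz hz2]]; [intros; apply hdR0|].
      assert (d0 < dR0 z) by (apply HRd; auto; rewrite Rabs_left by lra; lra).
      rewrite HR00 in hz. nra.
    - subst. rewrite HR00. reflexivity.
    - rewrite (sgn_pos x) by lra. apply sgn_pos.
      destruct (Rlt_dec x0 x) as [h2|h2]; [specialize (HRpos x h2); lra|].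
      destruct (MVT_cor2 R0 dR0 0 x h) as [z [hz hz2]]; [intros; apply hdR0|].
      assert (d0 < dR0 z) by (apply HRd; auto; rewrite Rabs_right by lra; lra).
      rewrite HR00 in hz. nra. }
  destruct hS as [_ [HS00 _]].
  destruct hadm as [xm [xp [hx [hxm [hxp [hlt [hgt hder]]]]]]].
  set (phi := fun x => R0 x + S x).
  set (phi' := fun x => dR0 x + dS x).
  assert (hphi : forall x, derivable_pt_lim phi x (phi' x)).
  { intros x; apply derivable_pt_lim_plus; auto. }
  set (a := phi' 0).
  assert (ha : d0 / 2 < a) by (destruct (hder 0 ltac:(lra)); unfold a, phi'; lra).
  assert (hxmK : - (K * delta) <= xm).
  { destruct (MVT_cor2 phi phi' xm 0 ltac:(lra)) as [z [hz hz2]]; [intros; apply hphi|].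
    destruct (hder z ltac:(lra)) as [hz3 _].
    unfold phi in hz. rewrite HR00, HS00, hxm in hz.
    assert (d0 / 2 * (0 - xm) < phi' z * (0 - xm)) by (apply Rmult_lt_compat_r; unfold phi'; lra).
    assert (- xm <= K * delta); [|lra].
    replace (K * delta) with (2 * delta / d0) by (unfold K; field; lra).
    apply le_div_helper; lra. }
  assert (hxpK : xp <= K * delta).
  { destruct (MVT_cor2 phi phi' 0 xp ltac:(lra)) as [z [hz hz2]]; [intros; apply hphi|].
    destruct (hder z ltac:(lra)) as [hz3 _].
    unfold phi in hz. rewrite HR00, HS00, hxp in hz.
    assert (d0 / 2 * (xp - 0) < phi' z * (xp - 0)) by (apply Rmult_lt_compat_r; unfold phi'; lra).
    replace (K * delta) with (2 * delta / d0) by (unfold K; field; lra).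
    apply le_div_helper; lra. }
  assert (HG0 : forall x, (x < xm \/ xp < x) -> Gmap dPsi delta R0 S x = 0).
  { intros x [h|h]; unfold Gmap; rewrite Hsg.
    - specialize (hlt x h). rewrite hsg by lra. rewrite !sgn_neg by lra. ring.
    - specialize (hgt x h). rewrite hsg by lra. rewrite !sgn_pos by lra. ring. }
  assert (HCK : K <= C) by (unfold C; lra).
  split; [|split].
  { intros x. unfold Gmap. eapply Rle_trans; [apply Rabs_triang|].
    rewrite Rabs_Ropp. pose proof (hbP (R0 x + S x)). pose proof (sgn_abs (R0 x)).
    unfold C; lra. }
  { intros x hx0. destruct (Rlt_dec x xm) as [h|h]; [elim hx0; apply HG0; auto|].
    destruct (Rlt_dec xp x) as [h'|h']; [elim hx0; apply HG0; auto|].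
    assert (K * delta <= C * delta) by (apply Rmult_le_compat_r; lra). lra. }
  intros L hL M hM.
  assert (hLpos : 0 <= L).
  { specialize (hL 1 0). replace (1 - 0) with 1 in hL by ring. rewrite Rabs_R1 in hL.
    pose proof (Rabs_pos (dS 1 - dS 0)); lra. }
  assert (hcpos : 0 < c) by lra.
  assert (hRb1 : forall s, Rabs (R0 s - sgn (R0 s)) <= B1).
  { intros s. unfold Rminus. eapply Rle_trans; [apply Rabs_triang|]. rewrite Rabs_Ropp.
    pose proof (sgn_abs (R0 s)). specialize (HRb s).
    assert (D0 / (1 - c ^ 2) <= D0 / (1 - c1 ^ 2)).
    { unfold Rdiv. apply Rmult_le_compat_l; [lra|]. apply Rinv_le_contravar; [lra|].
      assert (c ^ 2 <= c1 ^ 2) by (simpl; nra). lra. }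
    unfold B1; lra. }
  assert (hLip0 : forall x y, Rabs (dR0 y - dR0 x) <= L0 * Rabs (y - x)).
  { intros x y. destruct (Hwave dR0 hdR0 x y) as [pr hpr]. rewrite hpr.
    rewrite <- (RInt_Reals _ _ _ pr).
    assert (hb : Rabs (RInt (Delta1 (fun s => R0 s - sgn (R0 s))) x y) <= 4 * B1 * Rabs (y - x)).
    { apply RInt_abs_bound; [|apply ex_RInt_Reals_1; exact pr].
      intros t. unfold Delta1. pose proof (hRb1 (t + 1)). pose proof (hRb1 t). pose proof (hRb1 (t - 1)).
      unfold Rabs in *. repeat destruct Rcase_abs; lra. }
    unfold Rdiv. rewrite Rabs_mult. rewrite (Rabs_right (/ c ^ 2)) by (apply Rle_ge, Rlt_le, Rinv_0_lt_compat; nra).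
    assert (/ c ^ 2 <= / c0 ^ 2) by (apply Rinv_le_contravar; simpl; nra).
    unfold L0. unfold Rdiv. pose proof (Rabs_pos (y - x)).
    assert (0 <= / c ^ 2) by (apply Rlt_le, Rinv_0_lt_compat; nra).
    apply Rle_trans with (4 * B1 * Rabs (y - x) * / c ^ 2); [apply Rmult_le_compat_r; lra|].
    assert (0 <= 4 * B1 * Rabs (y - x)) by nra.
    apply Rle_trans with (4 * B1 * Rabs (y - x) * / c0 ^ 2); [apply Rmult_le_compat_l; lra|].
    right; ring. }
  set (Lam := L0 + L).
  assert (hLam : 0 <= Lam) by (unfold Lam; lra).
  assert (hphiLip : forall t, Rabs (phi' t - a) <= Lam * Rabs t).
  { intros t. unfold a, phi'. pose proof (hLip0 0 t). pose proof (hL t 0).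
    replace (t - 0) with t in *by ring.
    replace (dR0 t + dS t - (dR0 0 + dS 0)) with ((dR0 t - dR0 0) + (dS t - dS 0)) by ring.
    eapply Rle_trans; [apply Rabs_triang|]. unfold Lam; lra. }
  assert (hlin : forall t, derivable_pt_lim (fun t => a * t) t a).
  { intros t. pose proof (derivable_pt_lim_mult (fct_cte a) id t 0 1 (derivable_pt_lim_const a t) (derivable_pt_lim_id t)) as H.
    unfold mult_fct, fct_cte, id in H. replace (0 * t + a * 1) with a in H by ring. exact H. }
  assert (hquad : forall x, Rabs (phi x - a * x) <= Lam * x ^ 2).
  { intros x. pose proof (quad_bound (fun t => phi t - a * t) (fun t => phi' t - a) Lam hLam) as H.
    assert (H0 : phi 0 - a * 0 = 0) by (unfold phi; rewrite HR00, HS00; ring).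
    replace (phi x - a * x) with ((phi x - a * x) - (phi 0 - a * 0)) by (rewrite H0; ring).
    apply H; auto.
    intros t. apply derivable_pt_lim_minus; auto. }
  assert (hdLip : forall r s, Rabs (dPsi delta r - dPsi delta s) <= CPsi / delta * Rabs (r - s)).
  { apply lip_of_deriv with (ddPsi delta); auto. }
  set (k := fun x => dPsi delta (phi x) - dPsi delta (a * x)).
  assert (hk : forall x, Rabs (k x) <= CPsi / delta * (Lam * x ^ 2)).
  { intros x. unfold k. eapply Rle_trans; [apply hdLip|]. apply Rmult_le_compat_l; auto.
    apply Rdiv_le_0_compat; lra. }
  set (h := fun r => dPsi delta r - sgn r).
  assert (hGk : forall x, Gmap dPsi delta R0 S x = k x + h (a * x)).
  { intros x. unfold Gmap, k, h, phi. rewrite Hsg, sgn_mul by lra. ring. }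
  assert (hh0 : forall r, (r <= - delta \/ delta <= r) -> h r = 0).
  { intros r hr. unfold h. rewrite hsg by auto. ring. }
  assert (haK : 1 < a * K).
  { unfold K. apply Rmult_lt_reg_r with (d0 / 2); [lra|].
    replace (a * (2 / d0) * (d0 / 2)) with a by (field; lra). lra. }
  assert (hha : forall x, K * delta < Rabs x -> h (a * x) = 0).
  { intros x hx2. apply hh0. assert (1 * delta < a * K * delta) by (apply Rmult_lt_compat_r; lra).
    unfold Rabs in hx2; destruct Rcase_abs in hx2.
    - left. nra.
    - right. nra. }
  assert (hk0 : forall x, K * delta < Rabs x -> k x = 0).
  { intros x hx2. assert (Gmap dPsi delta R0 S x = 0).
    { apply HG0. unfold Rabs in hx2; destruct Rcase_abs in hx2; lra. }
    rewrite hGk, hha in H by auto. lra. }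
  assert (hMK : K * delta <= M).
  { assert (K * delta <= C * delta) by (apply Rmult_le_compat_r; lra). lra. }
  assert (hKd : 0 < K * delta) by (apply Rmult_lt_0_compat; lra).
  assert (haM : delta < a * M).
  { assert (1 * delta < a * K * delta) by (apply Rmult_lt_compat_r; lra).
    assert (a * (K * delta) <= a * M) by (apply Rmult_le_compat_l; lra). lra. }
  assert (I1 : is_RInt h (- delta) delta 0).
  { destruct hI as [pr hpr].
    pose proof (RInt_correct h _ _ (ex_RInt_Reals_1 _ _ _ pr)) as H.
    assert (E : RInt h (- delta) delta = 0) by (unfold h; rewrite (RInt_Reals _ _ _ pr); exact hpr).
    rewrite E in H. exact H. }
  assert (I2 : is_RInt h delta (a * M) 0).
  { apply is_RInt_zero_ext. intros x hx2. rewrite Rmin_left, Rmax_right in hx2 by lra.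
    apply hh0; lra. }
  assert (I3 : is_RInt h (a * - M) (- delta) 0).
  { apply is_RInt_zero_ext. intros x hx2. rewrite Rmin_left, Rmax_right in hx2 by lra.
    apply hh0; lra. }
  assert (I4 : is_RInt h (a * - M + 0) (a * M + 0) 0).
  { rewrite !Rplus_0_r. pose proof (is_RInt_Chasles h _ _ _ _ _ (is_RInt_Chasles h _ _ _ _ _ I3 I1) I2) as H.
    apply (is_RInt_val _ _ _ _ _ H). apply (eq_trans (y := 0 + 0 + 0)); [reflexivity|ring]. }
  assert (I5 : is_RInt (fun y => h (a * y)) (- M) M 0).
  { pose proof (is_RInt_scal _ _ _ (/ a) _ (is_RInt_comp_lin h a 0 (- M) M 0 I4)) as H.
    apply (is_RInt_val _ _ _ _ 0) in H; [| apply (eq_trans (y := / a * 0)); [reflexivity|ring]].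
    apply (is_RInt_ext (fun y => scal (/ a) (scal a (h (a * y + 0))))); [|exact H]. intros y _.
    apply (eq_trans (y := / a * (a * h (a * y + 0)))); [reflexivity|].
    rewrite Rplus_0_r. field. lra. }
  assert (hkc : forall z, continuous k z).
  { intros z. apply cont_to_coq. unfold k. apply continuity_pt_minus.
    - apply (continuity_pt_comp phi (dPsi delta)).
      + apply cont_of_deriv with phi'; auto.
      + apply cont_of_deriv with (ddPsi delta); auto.
    - apply (continuity_pt_comp (fun t => a * t) (dPsi delta)).
      + apply cont_of_deriv with (fun _ => a); auto.
      + apply cont_of_deriv with (ddPsi delta); auto. }
  assert (J1 : is_RInt k (- M) (- (K * delta)) 0).
  { apply is_RInt_zero_ext. intros x hx2. rewrite Rmin_left, Rmax_right in hx2 by lra.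
    apply hk0. rewrite Rabs_left; lra. }
  assert (J3 : is_RInt k (K * delta) M 0).
  { apply is_RInt_zero_ext. intros x hx2. rewrite Rmin_left, Rmax_right in hx2 by lra.
    apply hk0. rewrite Rabs_right; lra. }
  set (V := RInt k (- (K * delta)) (K * delta)).
  pose proof (@ex_RInt_continuous R_CompleteNormedModule k (- (K * delta)) (K * delta) (fun z _ => hkc z)) as hex.
  pose proof (@RInt_correct R_CompleteNormedModule k _ _ hex) as J2.
  assert (hV : Rabs V <= (K * delta - - (K * delta)) * (CPsi / delta * (Lam * (K * delta) ^ 2))).
  { apply abs_RInt_le_const; auto; [lra|]. intros t ht.
    eapply Rle_trans; [apply hk|]. apply Rmult_le_compat_l; [apply Rdiv_le_0_compat; lra|].
    apply Rmult_le_compat_l; auto. simpl. nra. }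
  assert (JG : is_RInt (Gmap dPsi delta R0 S) (- M) M V).
  { pose proof (is_RInt_plus _ _ _ _ _ _ (is_RInt_Chasles k _ _ _ _ _ (is_RInt_Chasles k _ _ _ _ _ J1 J2) J3) I5) as H.
    apply (is_RInt_val _ _ _ _ V) in H; [| apply (eq_trans (y := 0 + V + 0 + 0)); [reflexivity|ring]].
    apply (is_RInt_ext (fun y => k y + h (a * y))); [|exact H]. intros y _. rewrite hGk. reflexivity. }
  exists (ex_RInt_Reals_0 _ _ _ (ex_intro _ V JG)).
  rewrite <- RInt_Reals. rewrite (is_RInt_unique _ _ _ _ JG).
  eapply Rle_trans; [exact hV|].
  replace ((K * delta - - (K * delta)) * (CPsi / delta * (Lam * (K * delta) ^ 2)))
    with ((2 * K ^ 3 * delta ^ 2) * (CPsi * Lam)) by (field; lra).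
  assert (P1 : CPsi * Lam <= (CPsi + 1) * ((L0 + 1) * (1 + L))).
  { unfold Lam. assert (L0 + L <= (L0 + 1) * (1 + L)) by nra.
    apply Rle_trans with (CPsi * ((L0 + 1) * (1 + L))); [apply Rmult_le_compat_l; lra|].
    apply Rmult_le_compat_r; [nra|lra]. }
  assert (P2 : 0 <= 2 * K ^ 3 * delta ^ 2) by (apply Rmult_le_pos; [apply Rmult_le_pos; [lra|apply pow_le; lra]|apply pow_le; lra]).
  apply Rle_trans with ((2 * K ^ 3 * delta ^ 2) * ((CPsi + 1) * ((L0 + 1) * (1 + L)))); [apply Rmult_le_compat_l; auto|].
  replace ((2 * K ^ 3 * delta ^ 2) * ((CPsi + 1) * ((L0 + 1) * (1 + L))))
    with ((2 * K ^ 3 * (CPsi + 1) * (L0 + 1)) * ((1 + L) * delta ^ 2)) by ring.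
  replace (C * (1 + L) * delta ^ 2) with (C * ((1 + L) * delta ^ 2)) by ring.
  apply Rmult_le_compat_r; [apply Rmult_le_pos; [lra| apply pow_le; lra]|].
  unfold C. lra.
Qed.
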